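(* Let $H$ be a simple graph which is neither a matching nor a star, and let $\alpha,\beta>0$. (1) If $\operatorname{ex}(K_n,H)=O(n^\alpha)$ as $n\to\infty$, then $\mathcal{E}_H(k)=\Omega(k^{2/\alpha})$ as $k\to\infty$. (2) If $\operatorname{ex}(K_n,H)=\Omega(n^\beta)$ as $n\to\infty$, then $\mathcal{E}^*_H(k)=O(k^{3-\beta})$ as $k\to\infty$.
   Context: Graphs are 2-uniform without isolated vertices; a matching is $sK_2$ and a star is $K_{1,s}$. Multigraphs may have parallel edges (no loops), with $e(\cdot)$ counting multiplicity. $\operatorname{ex}(G,H)$ is the maximum number of edges of a sub-multigraph of $G$ containing no copy of $H$. $\mathcal{E}_H(k):=\sup\{e(G): G\text{ simple}, \operatorname{ex}(G,H)<k\}$ and $\mathcal{E}^*_H(k):=\sup\{e(G): G\text{ multigraph}, \operatorname{ex}(G,H)<k\}$. *)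

(* Defs.v *)
From mathcomp Require Import all_boot.
From Stdlib Require Import Reals.

Set Implicit Arguments.
Unset Strict Implicit.
Unset Printing Implicit Defensive.

(* A multigraph on vertex set 'I_n, given by its multiplicity function.
   Isolated vertices are harmless: they contribute neither edges nor copies. *)
Definition mgraph (n : nat) := 'I_n -> 'I_n -> nat.

Definition is_multigraph (n : nat) (m : mgraph n) : Prop :=
  (forall i j, m i j = m j i) /\ (forall i, m i i = 0%N).

Definition is_simple (n : nat) (m : mgraph n) : Prop :=
  is_multigraph m /\ (forall i j, (m i j <= 1)%N).

Definition edges (n : nat) (m : mgraph n) : nat :=
  \sum_(i < n) \sum_(j < n | (i < j)%N) m i j.

Definition Kn (n : nat) : mgraph n := fun i j => if i == j then 0%N else 1%N.
Arguments Kn : clear implicits.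

Definition is_graph (h : nat) (H : rel 'I_h) : Prop :=
  symmetric H /\ irreflexive H /\ (forall u, exists v, H u v).

Definition is_matching (h : nat) (H : rel 'I_h) : Prop :=
  forall u, #|[pred v | H u v]| = 1%N.

Definition is_star (h : nat) (H : rel 'I_h) : Prop :=
  exists c, forall u v, H u v -> u = c \/ v = c.

Definition contains (n : nat) (m : mgraph n) (h : nat) (H : rel 'I_h) : bool :=
  [exists f : {ffun 'I_h -> 'I_n},
     injectiveb f && [forall u, forall v, H u v ==> (0 < m (f u) (f v))%N]].

Definition ex (n : nat) (m : mgraph n) (h : nat) (H : rel 'I_h) : nat :=
  let b := \max_(i < n) \max_(j < n) m i j in
  \max_(F : {ffun 'I_n * 'I_n -> 'I_b.+1} |
          [forall i, forall j, ((F (i, j) : nat) <= m i j)%N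
                               && ((F (i, j) : nat) == F (j, i))]
          && ~~ contains (fun i j => (F (i, j) : nat)) H)
     edges (fun i j => (F (i, j) : nat)).

(* Main.v *)
Require Import Defs.
From mathcomp Require Import all_boot.
From Stdlib Require Import Reals.
From mathcomp Require Import zify fingroup perm.
From Stdlib Require Import Lia Lra FunctionalExtensionality Classical.
Set Implicit Arguments. Unset Strict Implicit. Unset Printing Implicit Defensive.
Local Open Scope nat_scope.

Definition E2 n (m : mgraph n) := \sum_(i < n) \sum_(j < n) m i j.

Lemma E2_edges n (m : mgraph n) : is_multigraph m -> E2 m = 2 * edges m.
Proof.
move=> [sym diag]; rewrite /E2 /edges.
have step : forall i : 'I_n, \sum_(j < n) m i j =
   \sum_(j < n | i < j) m i j + \sum_(j < n) (if j < i then m i j else 0).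
  move=> i; rewrite (bigID (fun j : 'I_n => i < j)) /=; congr (_ + _).
  rewrite big_mkcond /=; apply: eq_bigr => j _.
  case: (ltngtP i j) => [lt|gt|eq] //=.
  have -> : j = i by apply/val_inj.
  by rewrite diag.
under eq_bigr => i _ do rewrite step.
rewrite big_split /=.
rewrite [X in _ + X = _]exchange_big /=.
have -> : \sum_(j < n) \sum_(i < n) (if j < i then m i j else 0) =
          \sum_(j < n) \sum_(i < n | j < i) m j i.
  apply: eq_bigr => j _; rewrite [RHS]big_mkcond /=; apply: eq_bigr => i _.
  by rewrite sym.
by rewrite mul2n -addnn.
Qed.

Section Cont.
Variables (h : nat) (H : rel 'I_h).

Lemma containsP n (m : mgraph n) :
  reflect (exists f : 'I_h -> 'I_n, injective f /\
             forall u v, H u v -> 0 < m (f u) (f v)) (contains m H).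
Proof.
apply: (iffP existsP).
  move=> [f /andP [/injectiveP fi /forallP fe]]; exists f; split => // u v huv.
  by move/forallP: (fe u) => /(_ v) /implyP; apply.
move=> [f [fi fe]]; exists [ffun u => f u]; apply/andP; split.
  by apply/injectiveP => u v; rewrite !ffunE; apply: fi.
apply/forallP => u; apply/forallP => v; apply/implyP => huv.
by rewrite !ffunE; apply: fe.
Qed.

Lemma contains_map n1 n2 (m1 : mgraph n1) (m2 : mgraph n2) (g : 'I_n1 -> 'I_n2) :
  injective g -> (forall i j, 0 < m1 i j -> 0 < m2 (g i) (g j)) ->
  contains m1 H -> contains m2 H.
Proof.
move=> gi gm /containsP [f [fi fe]]; apply/containsP; exists (g \o f); split.
  exact: inj_comp.
by move=> u v huv; apply: gm; apply: fe.
Qed.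

Lemma ex_ub n (m F : mgraph n) :
  (forall i j, F i j <= m i j) -> (forall i j, F i j = F j i) ->
  ~~ contains F H -> edges F <= ex m H.
Proof.
move=> Fm Fs Fc; rewrite /ex.
set b := \max_(i < n) \max_(j < n) m i j.
have Fb : forall i j, F i j < b.+1.
  move=> i j; rewrite ltnS; apply: leq_trans (Fm i j) _.
  apply: leq_trans (leq_bigmax_cond (P := xpredT) (F := fun j => m i j) j isT) _.
  exact: (leq_bigmax_cond (P := xpredT) (F := fun i => \max_(j < n) m i j) i isT).
pose Fh : {ffun 'I_n * 'I_n -> 'I_b.+1} := [ffun p => Ordinal (Fb p.1 p.2)].
have eF : (fun i j => (Fh (i, j) : nat)) = F.
  by apply: functional_extensionality => i; apply: functional_extensionality => j; rewrite ffunE.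
have -> : edges F = edges (fun i j => (Fh (i, j) : nat)) by rewrite eF.
apply: (leq_bigmax_cond Fh).
rewrite eF Fc andbT; apply/forallP => i; apply/forallP => j.
by rewrite !ffunE /= Fm Fs eqxx.
Qed.

Lemma ex_attained n (m : mgraph n) :
  ~~ contains (fun _ _ : 'I_n => 0) H ->
  exists F : mgraph n, [/\ (forall i j, F i j <= m i j), (forall i j, F i j = F j i),
     ~~ contains F H & edges F = ex m H].
Proof.
move=> c0; rewrite /ex.
set b := \max_(i < n) \max_(j < n) m i j.
pose P := (fun F : {ffun 'I_n * 'I_n -> 'I_b.+1} =>
   [forall i, forall j, ((F (i, j) : nat) <= m i j) && ((F (i, j) : nat) == F (j, i))]
   && ~~ contains (fun i j => (F (i, j) : nat)) H).
pose F0 : {ffun 'I_n * 'I_n -> 'I_b.+1} := [ffun => ord0].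
have PF0 : P F0.
  rewrite /P; have -> : (fun i j => (F0 (i, j) : nat)) = (fun _ _ => 0).
    by apply: functional_extensionality => i; apply: functional_extensionality => j; rewrite ffunE.
  rewrite c0 andbT; apply/forallP => i; apply/forallP => j; by rewrite !ffunE.
have [F1 PF1 ->] := @eq_bigmax_cond _ P (fun F => edges (fun i j => (F (i, j) : nat)))
   (introT card_gt0P (ex_intro _ F0 PF0)).
exists (fun i j => (F1 (i, j) : nat)); move: PF1; rewrite /P /in_mem /= => /andP [/forallP f1 ->].
split => // i j; by have /andP [? /eqP] := (elimT forallP (f1 i)) j.
Qed.

End Cont.
Section HProps.
Variables (h : nat) (H : rel 'I_h).
Hypothesis Hg : is_graph H.
Hypothesis Hnm : ~ is_matching H.
Hypothesis Hns : ~ is_star H.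

Definition hdeg (u : 'I_h) := #|[pred v | H u v]|.

Lemma hdeg_ge1 u : 0 < hdeg u.
Proof.
case: Hg => _ [_ nb]; have [v huv] := nb u.
by apply/card_gt0P; exists v.
Qed.

Lemma H_has_deg2 : exists u, 1 < hdeg u.
Proof.
apply: NNPP => nex; apply: Hnm => u.
apply/eqP; rewrite eqn_leq hdeg_ge1 andbT.
by rewrite leqNgt; apply/negP => hu; apply: nex; exists u.
Qed.

Lemma H_has_edge : exists u v, H u v.
Proof. have [u _] := H_has_deg2; case: Hg => _ [_ nb]; have [v huv] := nb u; by exists u, v. Qed.

Lemma H_nonempty_free n : ~~ contains (fun _ _ : 'I_n => 0) H.
Proof.
apply/negP => /containsP [f [_ fe]]; have [u [v huv]] := H_has_edge.
by have := fe u v huv.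
Qed.

Lemma star_free n (F : mgraph n) (x : 'I_n) :
  (forall i j, 0 < F i j -> i = x \/ j = x) -> ~~ contains F H.
Proof.
move=> Fx; apply/negP => /containsP [f [fi fe]]; apply: Hns.
case: (pickP (fun u => f u == x)) => [c /eqP fc | nf].
  exists c => u v huv; have [] := Fx _ _ (fe u v huv); rewrite -fc => /fi; by auto.
have [u [v huv]] := H_has_edge; exists u => a b hab.
by have [] := Fx _ _ (fe a b hab) => /eqP; rewrite nf.
Qed.

Lemma matching_free n (F : mgraph n) :
  (forall i j j', 0 < F i j -> 0 < F i j' -> j = j') -> ~~ contains F H.
Proof.
move=> FM; apply/negP => /containsP [f [fi fe]].
have [u /card_gt1P [v [w [hv hw vw]]]] := H_has_deg2.
have := FM _ _ _ (fe u v hv) (fe u w hw) => /fi evw.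
by rewrite evw eqxx in vw.
Qed.

Definition SF := forall u v, H u v -> hdeg u <= 1 \/ hdeg v <= 1.

Lemma hdeg_inj n (F : mgraph n) (f : 'I_h -> 'I_n) u :
  injective f -> (forall u v, H u v -> 0 < F (f u) (f v)) ->
  hdeg u <= #|[pred j | 0 < F (f u) j]|.
Proof.
move=> fi fe; rewrite /hdeg -(card_imset _ fi).
apply: subset_leq_card; apply/subsetP => j /imsetP [v]; rewrite inE /= => huv ->.
by rewrite inE /=; apply: fe.
Qed.

End HProps.
Definition wdeg n (m : mgraph n) (x : 'I_n) := \sum_(j < n) m x j.

Definition restr n (m : mgraph n) (S : {set 'I_n * 'I_n}) : mgraph n :=
  fun i j => if (i, j) \in S then m i j else 0.

Lemma sum_pick n (a : 'I_n -> nat) x : \sum_(j < n) (if j == x then a j else 0) = a x.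
Proof. by rewrite -big_mkcond big_pred1_eq. Qed.

Lemma E2_star n (m : mgraph n) x : is_multigraph m ->
  E2 (fun i j => if (i == x) || (j == x) then m i j else 0) = 2 * wdeg m x.
Proof.
move=> [sym diag]; rewrite /E2 (bigD1 x) //= eqxx /=.
have -> : \sum_(i < n | i != x) \sum_(j < n) (if (i == x) || (j == x) then m i j else 0)
   = \sum_(i < n | i != x) m i x.
  apply: eq_bigr => i /negbTE ix; rewrite ix /=; exact: sum_pick.
have e : \sum_(i < n) m i x = m x x + \sum_(i < n | i != x) m i x by rewrite (bigD1 x).
rewrite diag add0n in e; rewrite -e /wdeg.
have -> : \sum_(i < n) m i x = \sum_(j < n) m x j by apply: eq_bigr => i _; rewrite sym.
by rewrite mul2n -addnn.
Qed.

Lemma E2_restr_ge n (m : mgraph n) (S : {set 'I_n * 'I_n}) :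
  (forall p, p \in S -> 0 < m p.1 p.2) -> #|S| <= E2 (restr m S).
Proof.
move=> Sp; rewrite /E2 pair_big /= -sum1_card big_mkcond /=.
apply: leq_sum => p _; rewrite /restr -surjective_pairing.
by case: ifP => // /Sp.
Qed.

Lemma restr_multi n (m : mgraph n) (S : {set 'I_n * 'I_n}) :
  is_multigraph m -> (forall p, p \in S -> (p.2, p.1) \in S) -> is_multigraph (restr m S).
Proof.
move=> [sym diag] Ss; split => [i j|i]; rewrite /restr; last by rewrite diag; case: ifP.
case: ifP => [/Ss /= -> | nij]; first by rewrite sym.
by case: ifP => // /Ss /=; rewrite nij.
Qed.

Lemma restr_le n (m : mgraph n) S i j : restr m S i j <= m i j.
Proof. by rewrite /restr; case: ifP. Qed.

Section HFree.
Variables (h : nat) (H : rel 'I_h).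
Hypothesis Hg : is_graph H.
Hypothesis Hnm : ~ is_matching H.
Hypothesis Hns : ~ is_star H.

Lemma wdeg_lt n (m : mgraph n) k x : is_multigraph m -> ex m H < k -> wdeg m x < k.
Proof.
move=> mm exk; apply: leq_ltn_trans exk.
have [sym diag] := mm.
set F := (fun i j => if (i == x) || (j == x) then m i j else 0).
have Fm : is_multigraph F.
  split => [i j|i]; rewrite /F; last by rewrite diag; case: ifP.
  by rewrite orbC sym.
have := @ex_ub h H n m F _ _ _.
have := E2_edges Fm; rewrite E2_star // => e.
have -> : wdeg m x = edges F by lia.
apply.
- by move=> i j; rewrite /F; case: ifP.
- by case: Fm.
- apply: (star_free Hg Hnm Hns (x := x)) => i j; rewrite /F.
  by case: ifP => [/orP [] /eqP ->|]; auto.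
Qed.

Lemma cover_bound n (m : mgraph n) (X : {set 'I_n}) :
  is_multigraph m -> (forall i j, 0 < m i j -> (i \in X) || (j \in X)) ->
  E2 m <= 2 * \sum_(x in X) wdeg m x.
Proof.
move=> [sym diag] cov.
have : E2 m <= \sum_(i < n) \sum_(j < n) ((if i \in X then m i j else 0) + (if j \in X then m i j else 0)).
  apply: leq_sum => i _; apply: leq_sum => j _.
  case: (posnP (m i j)) => [-> //|/cov /orP [] ->]; lia.
move/leq_trans; apply.
rewrite [Y in Y <= _](eq_bigr (fun i => \sum_(j < n) (if i \in X then m i j else 0) + \sum_(j < n) (if j \in X then m i j else 0))); last by move=> i _ /=; rewrite big_split.
rewrite big_split /= mul2n -addnn.
apply: leq_add.
  rewrite [X in _ <= X]big_mkcond /=; apply: leq_sum => i _.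
  by case: ifP => _; [rewrite /wdeg | rewrite big1].
rewrite exchange_big /= [X in _ <= X]big_mkcond /=; apply: leq_sum => j _.
case: ifP => _; last by rewrite big1.
by rewrite /wdeg; apply: leq_sum => i _; rewrite sym.
Qed.

Definition ismatch n (m : mgraph n) (M : {set 'I_n * 'I_n}) :=
  [forall p in M, (0 < m p.1 p.2) && ((p.2, p.1) \in M)] &&
  [forall p in M, forall q in M, (p.1 == q.1) ==> (p == q)].

Lemma multigraph_bound n (m : mgraph n) k :
  is_multigraph m -> ex m H < k -> edges m <= 2 * k * k.
Proof.
move=> mm exk; have [sym diag] := mm.
have m0 : ismatch m set0 by apply/andP; split; apply/forallP => p; rewrite inE.
case: (arg_maxnP (fun M : {set 'I_n * 'I_n} => #|M|) m0).
move=> M /andP [/forall_inP Mp /forall_inP Mu] Mmax.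
set X := [set p.1 | p in M].
have cov : forall i j, 0 < m i j -> (i \in X) || (j \in X).
  move=> i j mij; apply/negPn/negP; rewrite negb_or => /andP [iX jX].
  have ij : i != j by apply/eqP => eij; rewrite eij diag in mij.
  have niM : forall q, q \in M -> q.1 != i.
    by move=> q qM; apply/eqP => e; move: iX; rewrite -e; case/negP; apply/imsetP; exists q.
  have njM : forall q, q \in M -> q.1 != j.
    by move=> q qM; apply/eqP => e; move: jX; rewrite -e; case/negP; apply/imsetP; exists q.
  pose M' := M :|: [set (i, j); (j, i)].
  have ijM : (i, j) \notin M by apply/negP => /niM; rewrite eqxx.
  have jiM : (j, i) \notin M by apply/negP => /njM; rewrite eqxx.
  have cM' : #|M'| = #|M| + 2.
    rewrite cardsU; have -> : M :&: [set (i, j); (j, i)] = set0.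
      apply/setP => q; rewrite !inE; case: (boolP (q \in M)) => //= qM.
      by apply/negP => /orP [] /eqP eq; [move: ijM|move: jiM]; rewrite -eq qM.
    rewrite cards0 subn0 cards2; case: eqP => [[eij _]|_]; last by [].
    by rewrite eij eqxx in ij.
  have mM' : ismatch m M'.
    apply/andP; split; apply/forall_inP => p; rewrite !inE.
      case/orP => [pM|/orP [] /eqP -> /=].
      + by have /andP [-> s] := Mp p pM; rewrite /= ?inE s.
      + by rewrite mij ?inE eqxx ?orbT.
      + by rewrite sym mij ?inE eqxx ?orbT.
    move=> pM'; apply/forall_inP => q; rewrite !inE => qM'; apply/implyP => /eqP e1.
    move: pM' qM'; case/orP => [pM|/orP [] /eqP pe]; case/orP => [qM|/orP [] /eqP qe].
    all: try (by move/implyP: ((elimT forall_inP (Mu p pM)) q qM); rewrite e1 eqxx; apply).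
    all: try (by move: (niM _ pM) (njM _ pM); rewrite e1 qe /= eqxx ?orbT).
    all: try (by move: (niM _ qM) (njM _ qM); rewrite -e1 pe /= eqxx ?orbT).
    all: try (by rewrite pe qe).
    all: try (by move: e1; rewrite pe qe /= => eij; rewrite eij eqxx in ij).
  by have := Mmax _ mM'; rewrite cM'; lia.
have cardM : #|M| < 2 * k.
  have Ms : forall p, p \in M -> (p.2, p.1) \in M by move=> p /Mp /andP [].
  have Fm := restr_multi mm Ms.
  have := E2_restr_ge (S := M) (m := m) (fun p pM => proj1 (andP (Mp p pM))).
  rewrite (E2_edges Fm) => le1.
  have : edges (restr m M) <= ex m H.
    apply: ex_ub; [exact: restr_le|by case: Fm|].
    apply: (matching_free Hg Hnm) => i j j'; rewrite /restr.
    case: ifP => // ijM _; case: ifP => // ijM' _.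
    by move/implyP: ((elimT forall_inP (Mu _ ijM)) _ ijM'); rewrite eqxx => /(_ isT) /eqP [].
  lia.
have cX : #|X| < 2 * k by apply: leq_ltn_trans (leq_imset_card _ _) cardM.
have := cover_bound mm cov; rewrite (E2_edges mm).
have : \sum_(x in X) wdeg m x <= #|X| * k.
  rewrite -sum_nat_const; apply: leq_sum => x _; apply: ltnW; exact: wdeg_lt.
have : #|X| * k <= 2 * k * k by apply: leq_mul => //; apply: ltnW.
move: (#|X| * k) (2 * k * k) (\sum_(x in X) wdeg m x) => t u w; lia.
Qed.

End HFree.
Section Cover.
Variables (h : nat) (H : rel 'I_h).
Hypothesis Hg : is_graph H.

Definition iscov n (m : mgraph n) (E : {set 'I_n * 'I_n}) :=
  [forall p in E, (0 < m p.1 p.2) && ((p.2, p.1) \in E)] &&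
  [forall i, [exists j, 0 < m i j] ==> [exists j, (i, j) \in E]].

Lemma nonisolated_bound n (m : mgraph n) k :
  is_multigraph m -> ex m H < k -> ~ SF H ->
  #|[set i | [exists j, 0 < m i j]]| < 2 * k.
Proof.
move=> mm exk nSF; have [sym diag] := mm.
pose E0 := [set p : 'I_n * 'I_n | 0 < m p.1 p.2].
have cE0 : iscov m E0.
  apply/andP; split.
    by apply/forall_inP => p; rewrite !inE /= => mp; rewrite mp sym mp.
  apply/forallP => i; apply/implyP => /existsP [j mij]; apply/existsP; exists j.
  by rewrite inE.
case: (arg_minnP (fun E : {set 'I_n * 'I_n} => #|E|) cE0).
move=> E /andP [/forall_inP Ep /forallP Ec] Emin.
pose degE (u : 'I_n) := #|[pred j | (u, j) \in E]|.
have Emin' : forall u v, (u, v) \in E -> degE u <= 1 \/ degE v <= 1.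
  move=> u v uvE; apply: NNPP => /not_or_and [du dv].
  have du2 : 1 < degE u by lia.
  have dv2 : 1 < degE v by lia.
  have uv : u != v.
    by apply/eqP => e; have /andP [] := Ep _ uvE; rewrite /= e diag.
  pose E' := E :\: [set (u, v); (v, u)].
  have cE' : iscov m E'.
    apply/andP; split.
      apply/forall_inP => p; rewrite !inE => /andP [np pE].
      have /andP [-> sE] := Ep _ pE; rewrite sE andbT /=.
      move: np; apply: contra => /orP [] /eqP e; apply/orP.
        by right; apply/eqP; case: p e {pE sE} => a b /= [-> ->].
      by left; apply/eqP; case: p e {pE sE} => a b /= [-> ->].
    apply/forallP => i; apply/implyP => /(implyP (Ec i)) /existsP [j ijE].
    case: (boolP ((i, j) \in [set (u, v); (v, u)])) => [|nij]; last first.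
      by apply/existsP; exists j; rewrite inE nij.
    rewrite !inE => /orP [] /eqP [ei ej]; subst i j.
      have /card_gt1P [a [b [aE bE ab]]] := du2.
      have [c [cE cv]] : exists c, (u, c) \in E /\ c != v.
        case: (eqVneq a v) => [av|av]; last by exists a.
        by exists b; split => //; rewrite -av eq_sym.
      apply/existsP; exists c; rewrite !inE cE andbT; apply/negP => /orP [] /eqP [].
        by move=> e; rewrite e eqxx in cv.
      by move=> e _; rewrite e eqxx in uv.
    have /card_gt1P [a [b [aE bE ab]]] := dv2.
    have [c [cE cv]] : exists c, (v, c) \in E /\ c != u.
      case: (eqVneq a u) => [av|av]; last by exists a.
      by exists b; split => //; rewrite -av eq_sym.
    apply/existsP; exists c; rewrite !inE cE andbT; apply/negP => /orP [] /eqP [].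
      by move=> e _; rewrite e eqxx in uv.
    by move=> e; rewrite e eqxx in cv.
  have := Emin _ cE'.
  have : #|E'| < #|E|.
    apply: proper_card; apply/properP; split; first by apply/subsetP => p; rewrite inE => /andP [].
    by exists (u, v) => //; rewrite !inE eqxx.
  lia.
have Es : forall p, p \in E -> (p.2, p.1) \in E by move=> p /Ep /andP [].
have Fm := restr_multi mm Es.
have le1 := E2_restr_ge (S := E) (m := m) (fun p pE => proj1 (andP (Ep p pE))).
rewrite (E2_edges Fm) in le1.
have : edges (restr m E) <= ex m H.
  apply: ex_ub; [exact: restr_le|by case: Fm|].
  apply/negP => /containsP [f [fi fe]]; apply: nSF => a b hab.
  have fab := fe a b hab; rewrite /restr in fab.
  move: fab; case: ifP => // abE _.
  have hd : forall c, hdeg H c <= degE (f c).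
    move=> c; apply: leq_trans (@hdeg_inj _ H _ _ _ c fi fe) _.
    apply: subset_leq_card; apply/subsetP => j; rewrite !inE /restr.
    by case: ifP.
  have [] := Emin' _ _ abE => d; [left|right]; apply: leq_trans d; exact: hd.
have : #|[set i | [exists j, 0 < m i j]]| <= #|E|.
  apply: leq_trans (leq_imset_card fst E).
  apply: subset_leq_card; apply/subsetP => i; rewrite inE => /(implyP (Ec i)) /existsP [j ijE].
  by apply/imsetP; exists (i, j).
lia.
Qed.

End Cover.
Lemma perm2trans p (a b a' b' : 'I_p) : a != b -> a' != b' ->
  exists t : {perm 'I_p}, t a = a' /\ t b = b'.
Proof.
move=> ab ab'.
pose c := tperm a a' b.
have ca : a' != c.
  apply/eqP => e; move: ab; rewrite /c -{1}(tpermL a a') in e.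
  by move/perm_inj: e => ->; rewrite eqxx.
exists (tperm a a' * tperm c b')%g; rewrite !permM tpermL tpermD //; last first.
- by rewrite eq_sym.
- by rewrite eq_sym.
by split => //; rewrite -/c tpermL.
Qed.

Definition Gam p (F : mgraph p) (i j : 'I_p) := \sum_(s : {perm 'I_p}) F (s i) (s j).

Lemma Gam_const p (F : mgraph p) a b a' b' : a != b -> a' != b' ->
  Gam F a b = Gam F a' b'.
Proof.
move=> ab ab'; have [t [ta tb]] := perm2trans ab ab'.
rewrite /Gam (reindex_inj (mulgI t)) /=; apply: eq_bigr => s _.
by rewrite !permM ta tb.
Qed.

Lemma sum_perm p (G : 'I_p -> nat) (s : {perm 'I_p}) :
  \sum_(i < p) G (s i) = \sum_(i < p) G i.
Proof. by rewrite [RHS](reindex_inj (@perm_inj _ s)). Qed.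

Lemma Gam_sum p (F : mgraph p) :
  \sum_(i < p) \sum_(j < p) Gam F i j = #|{perm 'I_p}| * E2 F.
Proof.
rewrite /Gam.
transitivity (\sum_(i < p) \sum_(s : {perm 'I_p}) \sum_(j < p) F (s i) (s j)).
  by apply: eq_bigr => i _; exact: exchange_big.
rewrite exchange_big /= -sum_nat_const; apply: eq_bigr => s _.
rewrite /E2 -(sum_perm _ s); apply: eq_bigr => i _.
by rewrite -(sum_perm (fun j => F (s i) j) s).
Qed.

Lemma Gam_diag p (F : mgraph p) i : is_multigraph F -> Gam F i i = 0.
Proof. by move=> [_ d]; rewrite /Gam big1 // => s _; rewrite d. Qed.

Lemma Gam_count p (F : mgraph p) (a b : 'I_p) : is_multigraph F -> a != b ->
  p * (p - 1) * Gam F a b = #|{perm 'I_p}| * E2 F.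
Proof.
move=> Fm ab; rewrite -Gam_sum.
have -> : \sum_(i < p) \sum_(j < p) Gam F i j = \sum_(i < p) ((p - 1) * Gam F a b).
  apply: eq_bigr => i _; rewrite (bigD1 i) //= Gam_diag // add0n.
  rewrite (eq_bigr (fun _ => Gam F a b)); last first.
    by move=> j ji; apply: Gam_const => //; rewrite eq_sym.
  rewrite sum_nat_const; congr (_ * _).
  by rewrite (eq_card (B := predC1 i)) ?cardC1 ?card_ord ?subn1 // => j; rewrite !inE andbT.
by rewrite sum_nat_const card_ord mulnA.
Qed.

Section Avg.
Variables (h : nat) (H : rel 'I_h).

Lemma averaging p (m F : mgraph p) :
  is_multigraph m -> is_multigraph F -> (forall i j, F i j <= 1) -> ~~ contains F H ->
  E2 F * E2 m <= p * (p - 1) * (2 * ex m H).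
Proof.
move=> mm Fm F1 Fc; have [msym mdiag] := mm; have [Fsym Fdiag] := Fm.
case: (ltnP p 2) => p2.
  have -> : E2 m = 0.
    rewrite /E2 big1 // => i _; rewrite big1 // => j _.
    have -> : j = i by apply: ord_inj; move: (ltn_ord i) (ltn_ord j); lia.
    by rewrite mdiag.
  by rewrite muln0.
pose a : 'I_p := Ordinal (ltn_trans (ltnSn 0) p2).
pose b : 'I_p := Ordinal p2.
have ab : a != b by rewrite -val_eqE.
pose P := #|{perm 'I_p}|.
have P0 : 0 < P by apply/card_gt0P; exists 1%g.
pose W (s : {perm 'I_p}) := \sum_(i < p) \sum_(j < p) F (s i) (s j) * m i j.
have Wle : forall s, W s <= 2 * ex m H.
  move=> s; pose G : mgraph p := fun i j => F (s i) (s j) * m i j.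
  have Gm : is_multigraph G by split => [i j|i]; rewrite /G; [rewrite Fsym msym | rewrite mdiag muln0].
  have -> : W s = E2 G by rewrite /W /E2 /G.
  rewrite (E2_edges Gm) leq_mul2l /=; apply: ex_ub.
  - move=> i j; rewrite /G; have := F1 (s i) (s j); case: (F (s i) (s j)) => [|[]] //= _.
    by rewrite mul1n.
  - by case: Gm.
  - apply/negP => Gc; move/negP: Fc; apply; apply: (contains_map (g := s) (@perm_inj _ s) _ Gc).
    by move=> i j; rewrite /G muln_gt0 => /andP [].
have sumW : \sum_(s : {perm 'I_p}) W s = \sum_(i < p) \sum_(j < p) m i j * Gam F i j.
  rewrite /W /Gam exchange_big /=; apply: eq_bigr => i _.
  rewrite exchange_big /=; apply: eq_bigr => j _.
  by rewrite big_distrr /=; apply: eq_bigr => s _; rewrite mulnC.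
have key : p * (p - 1) * \sum_(s : {perm 'I_p}) W s = P * (E2 F * E2 m).
  rewrite sumW big_distrr /= /E2 [in RHS]big_distrr /= big_distrr /=; apply: eq_bigr => i _.
  rewrite big_distrr /= big_distrr /= big_distrr /=; apply: eq_bigr => j _.
  case: (eqVneq i j) => [->|ij]; first by rewrite mdiag !(mul0n, muln0).
  rewrite mulnCA (Gam_const F ij ab) (Gam_count Fm ab).
  by rewrite /P /E2 [LHS]mulnC mulnA.
have : \sum_(s : {perm 'I_p}) W s <= P * (2 * ex m H).
  rewrite /P -sum_nat_const; apply: leq_sum => s _; exact: Wle.
move/(leq_mul (leqnn (p * (p - 1)))); rewrite key.
by rewrite [X in _ <= X]mulnCA leq_pmul2l.
Qed.

End Avg.
Lemma sum_enum n (V : {set 'I_n}) (G : 'I_n -> nat) :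
  (forall i, i \notin V -> G i = 0) ->
  \sum_(a < #|V|) G (enum_val a) = \sum_(i < n) G i.
Proof.
move=> G0; rewrite -big_enum_val /= [RHS](bigID (mem V)) /=.
by rewrite [X in _ = _ + X]big1 ?addn0 // => i; apply: G0.
Qed.

Section Pull.
Variables (h : nat) (H : rel 'I_h).
Hypothesis Hg : is_graph H.
Hypothesis Hnm : ~ is_matching H.

Definition Vset n (m : mgraph n) := [set i | [exists j, 0 < m i j]].

Lemma pullback n (m : mgraph n) : is_multigraph m ->
  exists m' : mgraph #|Vset m|, [/\ is_multigraph m', E2 m' = E2 m & ex m' H <= ex m H].
Proof.
move=> mm; have [sym diag] := mm.
set V := Vset m.
have inV : forall i j, 0 < m i j -> i \in V.
  by move=> i j mij; rewrite inE; apply/existsP; exists j.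
pose e := (@enum_val _ (mem V)).
have eV : forall a, e a \in V by move=> a; apply: enum_valP.
exists (fun a b => m (e a) (e b)).
have mm' : is_multigraph (fun a b => m (e a) (e b)) by split => [a b|a]; [apply: sym| apply: diag].
split => //.
  rewrite /E2 -[RHS](sum_enum (V := V)).
    apply: eq_bigr => a _; rewrite (sum_enum (V := V)) // => j jV.
    apply/eqP; rewrite -leqn0 leqNgt; apply/negP; rewrite sym => /inV; by apply/negP.
  move=> i iV; apply: big1 => j _.
  by apply/eqP; rewrite -leqn0 leqNgt; apply/negP => /inV; apply/negP.
have [F' [F'le F'sym F'c F'e]] := @ex_attained _ H _ (fun a b => m (e a) (e b)) (H_nonempty_free Hg Hnm _).
rewrite -F'e.
case: (posnP #|V|) => [V0|V0].
  by rewrite /edges big1 // => a; move: (ltn_ord a); rewrite {2}V0.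
have [x0 x0V] : exists x0, x0 \in V by apply/card_gt0P.
pose r := enum_rank_in x0V.
have er : {in V, cancel r e} := enum_rankK_in x0V.
have re : cancel e r := enum_valK_in x0V.
have F'm : is_multigraph F'.
  split => // a; apply/eqP; rewrite -leqn0; apply: leq_trans (F'le a a) _; by rewrite diag.
pose F i j := if (i \in V) && (j \in V) then F' (r i) (r j) else 0.
have Fm : is_multigraph F.
  split => [i j|i]; rewrite /F; first by rewrite andbC F'sym.
  by case: ifP => // _; case: F'm => _ ->.
have -> : edges F' = edges F.
  have : E2 F' = E2 F.
    rewrite /E2 -[RHS](sum_enum (V := V)).
      apply: eq_bigr => a _; rewrite -(sum_enum (V := V)).
        by apply: eq_bigr => b _; rewrite /F eV eV /= !re.
      by move=> j jV; rewrite /F (negbTE jV) andbF.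
    by move=> i iV; apply: big1 => j _; rewrite /F (negbTE iV).
  rewrite (E2_edges F'm) (E2_edges Fm); lia.
apply: ex_ub.
- move=> i j; rewrite /F; case: ifP => // /andP [iV jV].
  by apply: leq_trans (F'le _ _) _; rewrite !er.
- by case: Fm.
- apply/negP => /containsP [f [fi fe]]; move/negP: F'c; apply; apply/containsP.
  have fV : forall u, f u \in V.
    move=> u; case: Hg => _ [_ nb]; have [v huv] := nb u.
    by have := fe u v huv; rewrite /F; case: ifP => // /andP [].
  exists (r \o f); split.
    by move=> u v /= ruv; apply: fi; rewrite -(er _ (fV u)) -(er _ (fV v)) ruv.
  by move=> u v huv; have := fe u v huv; rewrite /F !fV.
Qed.

End Pull.
Lemma greedy n (x0 : 'I_n) (S : {set 'I_n}) (As : seq {set 'I_n}) :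
  (forall A, A \in As -> #|S| + size As <= #|A|) ->
  exists xs : seq 'I_n, [/\ size xs = size As, uniq xs, (forall x, x \in xs -> x \notin S)
     & forall i, i < size As -> nth x0 xs i \in nth set0 As i].
Proof.
elim: As S => [|A As IH] S hyp; first by exists [::].
have hA : #|S| < #|A| by have := hyp A (mem_head _ _); rewrite /=; lia.
have /subsetPn [x xA xS] : ~~ (A \subset S).
  by apply/negP => sub; have := subset_leq_card sub; lia.
have [|xs [sz un av nt]] := IH (x |: S).
  move=> A' A'in; have := hyp A' (mem_behead (s := A :: As) A'in); rewrite cardsU1 xS /=; lia.
exists (x :: xs); split => /=; first by rewrite sz.
- rewrite un andbT; apply/negP => /av; by rewrite setU11.
- move=> y; rewrite inE => /orP [/eqP -> //|/av]; by rewrite inE negb_or => /andP [].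
- by case=> [|i] //= /nt.
Qed.

Section SFembed.
Variables (h : nat) (H : rel 'I_h).
Hypothesis Hg : is_graph H.
Hypothesis Hsf : SF H.

Definition center u := (1 < hdeg H u) || [exists v, H u v && (hdeg H v == 1) && (u < v)].
Definition nb u := odflt u [pick v | H u v].

Lemma Hsym u v : H u v -> H v u.
Proof. by case: Hg => s _; rewrite s. Qed.

Lemma nbP u : H u (nb u).
Proof.
rewrite /nb; case: pickP => [v //|nv] /=.
by case: Hg => _ [_ nbh]; have [v huv] := nbh u; move: (nv v); rewrite huv.
Qed.

Lemma deg1_uniq u v w : hdeg H u <= 1 -> H u v -> H u w -> v = w.
Proof.
move/card_le1P => c huv huw.
have := c v huv w; rewrite /= inE huw => /esym /eqP //.
Qed.

Lemma leaf_deg l : ~~ center l -> hdeg H l = 1.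
Proof.
rewrite /center negb_or => /andP [d _]; have := hdeg_ge1 Hg l; lia.
Qed.

Lemma leaf_nb l : ~~ center l -> center (nb l).
Proof.
move=> nl; have dl := leaf_deg nl; rewrite /center.
case: (ltnP 1 (hdeg H (nb l))) => //= dv.
apply/existsP; exists l; rewrite (Hsym (nbP l)) dl eqxx /=.
have lnb : l != nb l by apply/eqP => e; case: Hg => _ [irr _]; move: (nbP l); rewrite -e irr.
move: nl; rewrite /center negb_or => /andP [_ /existsP nex].
case: (ltngtP (nb l) l) => // [gt|/val_inj e]; last by rewrite e eqxx in lnb.
exfalso; apply: nex; exists (nb l); rewrite nbP gt andbT /=.
by have := hdeg_ge1 Hg (nb l); rewrite eqn_leq dv => ->.
Qed.

Lemma two_centers u v : H u v -> hdeg H u <= 1 -> center u -> center v -> False.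
Proof.
move=> huv du cu cv.
move: cu; rewrite /center ltnNge du /= => /existsP [w /andP [/andP [huw dw] uw]].
have ew := deg1_uniq du huv huw; subst w.
move: cv; rewrite /center (eqP dw) ltnn /= => /existsP [w' /andP [/andP [hvw' dw'] vw']].
have d1 : hdeg H v <= 1 by rewrite (eqP dw).
have := deg1_uniq d1 (Hsym huv) hvw'.
move=> e; subst w'; lia.
Qed.

Lemma edge_cases u v : H u v ->
  (center u && ~~ center v && (nb v == u)) || (center v && ~~ center u && (nb u == v)).
Proof.
move=> huv.
case cu: (center u); case cv: (center v) => /=.
- exfalso; have [] := Hsf huv => d.
    exact: (two_centers huv d cu cv).
  exact: (two_centers (Hsym huv) d cv cu).
- have d : hdeg H v <= 1 by rewrite leaf_deg // cv.
  by rewrite (deg1_uniq d (nbP v) (Hsym huv)) eqxx.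
- have d : hdeg H u <= 1 by rewrite leaf_deg // cu.
  by rewrite (deg1_uniq d (nbP u) huv) eqxx.
- have lu : ~~ center u by rewrite cu.
  have d : hdeg H u <= 1 by rewrite leaf_deg.
  have := leaf_nb lu; rewrite (deg1_uniq d (nbP u) huv) => c.
  by rewrite c in cv.
Qed.

Lemma SF_embed n (F : mgraph n) : 0 < h -> (forall i j, F i j = F j i) ->
  h <= #|[set x | 2 * h <= #|[set j | 0 < F x j]|]| -> contains F H.
Proof.
move=> h0 Fs hB.
set B := [set x | 2 * h <= #|[set j | 0 < F x j]|].
pose N x := [set j | 0 < F x j].
have [x0 x0B] : exists x0, x0 \in B.
  by apply/card_gt0P; apply: leq_trans hB.
set Cs := [seq u <- enum 'I_h | center u].
set Ls := [seq u <- enum 'I_h | ~~ center u].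
have szCL : size Cs + size Ls = h.
  by rewrite !size_filter count_predC size_enum_ord.
have [|xsC [szC unC _ ntC]] := @greedy n x0 set0 (nseq (size Cs) B).
  move=> A; rewrite mem_nseq => /andP [_ /eqP ->]; rewrite cards0 size_nseq add0n; apply: leq_trans hB; lia.
rewrite size_nseq in szC ntC.
pose fC u := nth x0 xsC (index u Cs).
have inC : forall u, center u -> u \in Cs by move=> u cu; rewrite mem_filter cu mem_enum.
have inL : forall u, ~~ center u -> u \in Ls by move=> u cu; rewrite mem_filter cu mem_enum.
have NB : forall u, center u -> 2 * h <= #|N (fC u)|.
  move=> u cu; have uC := inC u cu.
  have := ntC (index u Cs); rewrite index_mem uC => /(_ isT).
  by rewrite nth_nseq index_mem uC inE.
pose S := [set x in xsC].
have [|xsL [szL unL avL ntL]] := @greedy n x0 S [seq N (fC (nb l)) | l <- Ls].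
  move=> A /mapP [l lL ->]; rewrite size_map.
  have cl : center (nb l) by apply: leaf_nb; move: lL; rewrite mem_filter => /andP [].
  have := NB _ cl.
  have : #|S| <= size Cs by rewrite cardsE; apply: leq_trans (card_size _) _; rewrite szC.
  move=> a b; apply: leq_trans b; move: a szCL; move: (#|S|) (size Cs) (size Ls) => x y z; lia.
rewrite size_map in szL ntL.
pose f u := if center u then fC u else nth x0 xsL (index u Ls).
have iC : forall u, center u -> index u Cs < size xsC by move=> u /inC; rewrite szC index_mem.
have iL : forall u, ~~ center u -> index u Ls < size xsL by move=> u /inL; rewrite szL index_mem.
apply/containsP; exists f; split.
  move=> u v; rewrite /f.
  case cu: (center u); case cv: (center v).
  - move/eqP; rewrite /fC nth_uniq ?iC // => /eqP e.
    by have := congr1 (nth u Cs) e; rewrite !nth_index ?inC.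
  - move=> e; have : fC u \in S by rewrite inE /fC mem_nth ?iC.
    by rewrite e; move/negP: (avL _ (mem_nth x0 (iL v (negbT cv)))).
  - move=> e; have : fC v \in S by rewrite inE /fC mem_nth ?iC.
    by rewrite -e; move/negP: (avL _ (mem_nth x0 (iL u (negbT cu)))).
  - move/eqP; rewrite nth_uniq ?iL ?cu ?cv // => /eqP e.
    by have := congr1 (nth u Ls) e; rewrite !nth_index ?inL ?cu ?cv.
move=> u v huv; have := edge_cases huv.
case/orP => /andP [/andP [cu lv] /eqP nbv].
  rewrite /f cu (negbTE lv).
  have := ntL (index v Ls); rewrite index_mem inL // => /(_ isT).
  by rewrite (nth_map v) ?index_mem ?inL // nth_index ?inL // nbv inE.
rewrite Fs /f cu (negbTE lv).
have := ntL (index u Ls); rewrite index_mem inL // => /(_ isT).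
by rewrite (nth_map u) ?index_mem ?inL // nth_index ?inL // nbv inE.
Qed.

End SFembed.

Lemma SF_bound h (H : rel 'I_h) n : is_graph H -> SF H -> 0 < h -> ex (Kn n) H <= 3 * h * n.
Proof.
move=> Hg Hsf h0; rewrite /ex; apply/bigmax_leqP => Fh /andP [/forallP Fk Fc].
set F := (fun i j => (Fh (i, j) : nat)) in Fc *.
have Fle : forall i j, F i j <= Kn n i j.
  by move=> i j; have /andP [] := (elimT forallP (Fk i)) j.
have Fs : forall i j, F i j = F j i.
  by move=> i j; have /andP [_ /eqP] := (elimT forallP (Fk i)) j.
have Fm : is_multigraph F.
  split => // i; apply/eqP; rewrite -leqn0; apply: leq_trans (Fle i i) _; by rewrite /Kn eqxx.
have F1 : forall i j, F i j <= 1.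
  by move=> i j; apply: leq_trans (Fle i j) _; rewrite /Kn; case: eqP.
set B := [set x | 2 * h <= #|[set j | 0 < F x j]|].
have hB : #|B| < h.
  rewrite ltnNge; apply/negP => hb; move/negP: Fc; apply; exact: SF_embed.
have st1 : forall i, \sum_(j < n) F i j <= #|[set j | 0 < F i j]|.
  move=> i; rewrite cardsE -sum1_card [X in _ <= X]big_mkcond; apply: leq_sum => j _.
  by rewrite -topredE /=; have := F1 i j; case: (F i j) => [|[]].
have st2 : forall i, #|[set j | 0 < F i j]| <= (if i \in B then n else 0) + 2 * h.
  move=> i; case: ifP => iB.
    have := @max_card _ [set j | 0 < F i j]; rewrite card_ord; lia.
  by move: iB; rewrite inE add0n => /negbT; rewrite -ltnNge => /ltnW.
have : E2 F <= #|B| * n + n * (2 * h).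
  rewrite /E2; apply: (@leq_trans (\sum_(i < n) ((if i \in B then n else 0) + 2 * h))).
    by apply: leq_sum => i _; exact: leq_trans (st1 i) (st2 i).
  rewrite big_split /= -big_mkcond /= !sum_nat_const card_ord.
  by [].
rewrite (E2_edges Fm) => le.
have : #|B| * n <= h * n by apply: leq_mul => //; apply: ltnW.
move: le; move: (#|B| * n) (edges F) => x y; lia.
Qed.

Lemma nonSF_nat h (H : rel 'I_h) n (m : mgraph n) k :
  is_graph H -> ~ is_matching H -> ~ is_star H -> ~ SF H ->
  is_multigraph m -> ex m H < k ->
  exists p, [/\ p < 2 * k, edges m <= p * k & 2 * ex (Kn p) H * edges m <= p * (p - 1) * k].
Proof.
move=> Hg Hnm Hns nSF mm exk.
have [m' [mm' E2e exle]] := pullback Hg Hnm mm.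
exists #|Vset m|; split.
- by have := nonisolated_bound mm exk nSF.
- have cov : forall i j, 0 < m i j -> (i \in Vset m) || (j \in Vset m).
    by move=> i j mij; rewrite inE; apply/orP; left; apply/existsP; exists j.
  have := cover_bound mm cov; rewrite (E2_edges mm).
  have : \sum_(x in Vset m) wdeg m x <= #|Vset m| * k.
    rewrite -sum_nat_const; apply: leq_sum => x _; apply: ltnW; exact: (wdeg_lt Hg Hnm Hns).
  move: (\sum_(x in Vset m) wdeg m x) => s; lia.
- set p := #|Vset m| in m' mm' E2e exle *.
  have [F [Fle Fs Fc Fe]] := @ex_attained _ H _ (Kn p) (H_nonempty_free Hg Hnm _).
  have Fm : is_multigraph F.
    split => // i; apply/eqP; rewrite -leqn0; apply: leq_trans (Fle i i) _; by rewrite /Kn eqxx.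
  have F1 : forall i j, F i j <= 1.
    by move=> i j; apply: leq_trans (Fle i j) _; rewrite /Kn; case: eqP.
  have := averaging mm' Fm F1 Fc.
  rewrite E2e (E2_edges mm) (E2_edges Fm) Fe.
  have : p * (p - 1) * (2 * ex m' H) <= p * (p - 1) * (2 * k).
    by rewrite leq_mul2l leq_mul2l /=; apply/orP; right; apply: leq_trans exle (ltnW exk).
  move: (p * (p - 1)) (ex (Kn p) H) (edges m) => a b c.
  move=> X Y; have := leq_trans Y X.
  have -> : 2 * b * (2 * c) = 2 * (2 * b * c) by rewrite mulnCA.
  by rewrite [X in _ <= X]mulnCA leq_pmul2l.
Qed.

Lemma Kn_multi n : is_multigraph (Kn n).
Proof. split => [i j|i]; rewrite /Kn ?eqxx // eq_sym; by []. Qed.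

Lemma Kn_simple n : is_simple (Kn n).
Proof. split; first exact: Kn_multi. by move=> i j; rewrite /Kn; case: eqP. Qed.

Lemma Kn_edges n : 2 * edges (Kn n) = n * (n - 1).
Proof.
rewrite -(E2_edges (Kn_multi n)) /E2.
rewrite (eq_bigr (fun _ => n - 1)) ?sum_nat_const ?card_ord //.
move=> i _; rewrite (bigD1 i) //= /Kn eqxx add0n.
rewrite (eq_bigr (fun _ => 1)); last by move=> j /negbTE; rewrite eq_sym => ->.
rewrite sum_nat_const muln1.
by rewrite (eq_card (B := predC1 i)) ?cardC1 ?card_ord ?subn1 // => j; rewrite !inE andbT.
Qed.

Lemma ex_Kn_le h (H : rel 'I_h) n : ex (Kn n) H <= n * n.
Proof.
rewrite /ex; apply/bigmax_leqP => Fh /andP [/forallP Fk _].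
rewrite /edges -[n in n * _]card_ord -sum_nat_const; apply: leq_sum => i _.
apply: leq_trans (_ : \sum_(j < n) 1 <= n); last by rewrite sum_nat_const card_ord muln1.
rewrite [X in X <= _]big_mkcond; apply: leq_sum => j _; case: ifP => // _.
by have /andP [le _] := (elimT forallP (Fk i)) j; apply: leq_trans le _; rewrite /Kn; case: eqP.
Qed.

Local Open Scope R_scope.

Lemma floorR x : 0 <= x -> exists n : nat, INR n <= x < INR n + 1.
Proof.
move=> x0; have [b1 b2] := base_Int_part x.
have z0 : (0 <= Int_part x)%Z.
  have : (-1 < Int_part x)%Z by apply: lt_IZR; lra.
  lia.
exists (Z.to_nat (Int_part x)); rewrite INR_IZR_INZ Znat.Z2Nat.id //; lra.
Qed.

Lemma nat_above r : exists K : nat, r <= INR K.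
Proof.
have [n [_ h]] := floorR (Rmax_r r 0).
exists n.+1; rewrite S_INR; have := Rmax_l r 0; lra.
Qed.

Lemma Rpower_pos x y : 0 < Rpower x y.
Proof. rewrite /Rpower; exact: exp_pos. Qed.

Lemma growth (c beta gamma A : R) (N : nat) : 0 < c -> gamma < beta ->
  exists n : nat, leq N n /\ leq 1 n /\ A * Rpower (INR n) gamma < c * Rpower (INR n) beta.
Proof.
move=> c0 gb.
set T := Rmax (A / c) 1.
have [K hK] := nat_above (Rpower T (/ (beta - gamma))).
exists (maxn (maxn N 1) K.+1); split; [|split].
- by rewrite !leq_max leqnn.
- by rewrite !leq_max orbT.
set n := maxn (maxn N 1) K.+1.
have nK : INR K < INR n.
  apply: lt_INR; apply/ltP; by rewrite !leq_max ltnSn orbT.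
have n0 : 0 < INR n by apply: Rle_lt_trans nK; apply: pos_INR.
have T1 : 1 <= T by apply: Rmax_r.
have T0 : 0 < T by lra.
have bg : 0 < beta - gamma by lra.
have : T < Rpower (INR n) (beta - gamma).
  have -> : T = Rpower (Rpower T (/ (beta - gamma))) (beta - gamma).
    by rewrite Rpower_mult Rinv_l ?Rpower_1 //; lra.
  apply: Rlt_Rpower_l => //; split; [exact: Rpower_pos| lra].
have AT : A / c <= T by apply: Rmax_l.
have -> : Rpower (INR n) beta = Rpower (INR n) gamma * Rpower (INR n) (beta - gamma).
  by rewrite -Rpower_plus; congr Rpower; ring.
have g0 := Rpower_pos (INR n) gamma.
move=> hT.
have : A <= c * T.
  have : A = c * (A / c) by field; lra.
  move=> ->; apply: Rmult_le_compat_l; lra.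
move=> AcT.
have : c * T * Rpower (INR n) gamma < c * (Rpower (INR n) gamma * Rpower (INR n) (beta - gamma)).
  rewrite (Rmult_comm (Rpower _ gamma)) -Rmult_assoc; apply: Rmult_lt_compat_r => //.
  by apply: Rmult_lt_compat_l.
have : A * Rpower (INR n) gamma <= c * T * Rpower (INR n) gamma.
  by apply: Rmult_le_compat_r; lra.
lra.
Qed.
Close Scope R_scope.

Lemma INR_muln a b : INR (a * b) = (INR a * INR b)%R.
Proof. by rewrite -multE mult_INR. Qed.

Lemma INR_sub1 n : (1 <= n)%N -> INR (n - 1) = (INR n - 1)%R.
Proof. move=> n1; rewrite -minusE minus_INR //; apply/leP. exact: n1. Qed.

Lemma Rpow2 x : (0 < x)%R -> Rpower x 2 = (x * x)%R.
Proof. move=> x0; have -> : 2%R = INR 2 by rewrite /= ; ring. by rewrite Rpower_pow //= Rmult_1_r. Qed.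

Lemma Rpower_inv a z : (0 < a)%R -> Rpower (/ a) z = Rpower a (- z).
Proof. move=> a0; rewrite /Rpower ln_Rinv //; congr exp; ring. Qed.

Lemma part1 h (H : rel 'I_h) (alpha : R) : is_graph H -> ~ is_matching H -> (0 < alpha)%R ->
  (exists C : R, exists N : nat, forall n : nat, (N <= n)%N ->
       (INR (ex (Kn n) H) <= C * Rpower (INR n) alpha)%R) ->
   exists c : R, (0 < c)%R /\ exists K : nat, forall k : nat, (K <= k)%N ->
     exists (n : nat) (m : mgraph n),
       is_simple m /\ (ex m H < k)%N /\
       (c * Rpower (INR k) (2 / alpha) <= INR (edges m))%R.
Proof.
move=> Hg Hnm a0 [C [N HC]].
pose C' := Rmax C 1.
have C'1 : (1 <= C')%R by apply: Rmax_r.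
have CC' : (C <= C')%R by apply: Rmax_l.
pose mx := maxn N 2.
pose M := (INR mx + 1)%R.
have M0 : (0 < M)%R by rewrite /M; have := pos_INR mx; lra.
exists (Rpower (2 * C') (- (2 / alpha)) / 16)%R; split.
  have := Rpower_pos (2 * C') (- (2 / alpha)); lra.
have [K0 hK0] := nat_above (2 * C' * Rpower M alpha)%R.
exists (maxn K0 1) => k kK.
have k1 : (1 <= k)%N by apply: leq_trans kK; rewrite leq_maxr.
have kK0 : (2 * C' * Rpower M alpha <= INR k)%R.
  apply: Rle_trans hK0 _; apply: le_INR; apply/leP; apply: leq_trans kK; exact: leq_maxl.
have k0 : (0 < INR k)%R by apply: lt_0_INR; apply/ltP.
pose y := (INR k / (2 * C'))%R.
have y0 : (0 < y)%R by rewrite /y; apply: Rdiv_lt_0_compat; lra.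
pose x := Rpower y (/ alpha).
have x0 : (0 < x)%R := Rpower_pos _ _.
have xa : Rpower x alpha = y by rewrite /x Rpower_mult Rinv_l ?Rpower_1 //; lra.
have xM : (M <= x)%R.
  have -> : M = Rpower (Rpower M alpha) (/ alpha) by rewrite Rpower_mult Rinv_r ?Rpower_1 //; lra.
  apply: Rle_Rpower_l; first by have := Rinv_0_lt_compat _ a0; lra.
  split; first exact: Rpower_pos.
  rewrite /y; apply: (Rmult_le_reg_r (2 * C')); first lra.
  rewrite /Rdiv Rmult_assoc Rinv_l; lra.
have [n [nx xn]] := floorR (Rlt_le _ _ x0).
have nmx : (mx < n)%N.
  apply/ltP; apply: INR_lt; rewrite /M in xM; lra.
have n2 : (2 <= n)%N by apply: leq_trans nmx; rewrite ltnW // ltnS leq_maxr.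
have nN : (N <= n)%N by apply: leq_trans (ltnW nmx); rewrite leq_maxl.
have n2R : (2 <= INR n)%R by have := le_INR 2 n (elimTF leP n2); rewrite /=; lra.
exists n, (Kn n); split; first exact: Kn_simple.
split.
- have := HC n nN.
  have py : (Rpower (INR n) alpha <= y)%R by rewrite -xa; apply: Rle_Rpower_l; lra.
  have p0 := Rpower_pos (INR n) alpha.
  move=> hex.
  have : (INR (ex (Kn n) H) < INR k)%R.
    have : (C * Rpower (INR n) alpha <= C' * Rpower (INR n) alpha)%R by apply: Rmult_le_compat_r; lra.
    have : (C' * Rpower (INR n) alpha <= C' * y)%R by apply: Rmult_le_compat_l; lra.
    have : (C' * y = INR k / 2)%R by rewrite /y; field; lra.
    lra.
  by move/INR_lt/ltP.
- have e2 := Kn_edges n.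
  have eR : (INR (edges (Kn n)) = INR n * (INR n - 1) / 2)%R.
    have := f_equal INR e2; rewrite !INR_muln INR_sub1 ?(leq_trans _ n2) //= => e.
    lra.
  rewrite eR.
  have -> : (Rpower (2 * C') (- (2 / alpha)) / 16 * Rpower (INR k) (2 / alpha) = x * x / 16)%R.
    have e1 : (Rpower (INR k) (2 / alpha) * Rpower (2 * C') (- (2 / alpha)) = Rpower y (2 / alpha))%R.
      rewrite -Rpower_inv; last lra.
      rewrite Rpower_mult_distr //; by apply: Rinv_0_lt_compat; lra.
    have e3 : (x * x = Rpower y (2 / alpha))%R.
      rewrite -Rpow2 // /x Rpower_mult; congr Rpower; field; lra.
    rewrite e3 -e1; field.
  nra.
Qed.

Lemma part2 h (H : rel 'I_h) (beta : R) : is_graph H -> ~ is_matching H -> ~ is_star H ->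
  (0 < beta)%R ->
  (exists c : R, (0 < c)%R /\ exists N : nat, forall n : nat, (N <= n)%N ->
       (c * Rpower (INR n) beta <= INR (ex (Kn n) H))%R) ->
   exists C : R, exists K : nat, forall k : nat, (K <= k)%N ->
     forall (n : nat) (m : mgraph n),
       is_multigraph m -> (ex m H < k)%N ->
       (INR (edges m) <= C * Rpower (INR k) (3 - beta))%R.
Proof.
move=> Hg Hnm Hns b0 [c [c0 [N Hc]]].
have [u0 [v0 _]] := H_has_edge Hg Hnm.
have h0 : (0 < h)%N := leq_ltn_trans (leq0n _) (ltn_ord u0).
have b2 : (beta <= 2)%R.
  apply: Rnot_lt_le => b2.
  have [n [nN [n1 lt]]] := growth 1%R N c0 b2.
  have := Hc n nN; have := ex_Kn_le H n.
  move/leP/le_INR; rewrite INR_muln -Rpow2; last by apply: lt_0_INR; apply/ltP.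
  lra.
pose C := (2 + INR N + Rpower 2 (2 - beta) / (2 * c))%R.
have C2 : (2 + INR N <= C)%R.
  have := Rpower_pos 2 (2 - beta); have : (0 < 2 * c)%R by lra.
  move=> a b; have : (0 < Rpower 2 (2 - beta) / (2 * c))%R by apply: Rdiv_lt_0_compat.
  rewrite /C; lra.
exists C, 1%N => k k1 n m mm exk.
have kR : (1 <= INR k)%R by have := le_INR 1 k (elimTF leP k1); rewrite /=.
have K3 : (INR k <= Rpower (INR k) (3 - beta))%R.
  rewrite -{1}(Rpower_1 (INR k)); [apply: Rle_Rpower; lra | lra].
have e0 := pos_INR (edges m).
have N0 := pos_INR N.
case: (classic (SF H)) => [sf|nsf].
- have b1 : (beta <= 1)%R.
    apply: Rnot_lt_le => b1.
    have [n' [nN [n1 lt]]] := growth (INR (3 * h * 1)) N c0 b1.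
    have := Hc n' nN; have := SF_bound n' Hg sf h0.
    move/leP/le_INR => a b.
    rewrite Rpower_1 in lt; last by apply: lt_0_INR; apply/ltP.
    rewrite !INR_muln in a lt; change (INR 1) with 1%R in lt; rewrite Rmult_1_r in lt; lra.
  have := multigraph_bound Hg Hnm Hns mm exk.
  move/leP/le_INR; rewrite !INR_muln.
  have : (INR k * INR k <= Rpower (INR k) (3 - beta))%R.
    rewrite -Rpow2; last lra.
    apply: Rle_Rpower; lra.
  have : (INR 2 = 2)%R by rewrite /=; ring.
  move=> -> a b.
  have : (2 * Rpower (INR k) (3 - beta) <= C * Rpower (INR k) (3 - beta))%R.
    apply: Rmult_le_compat_r; [exact: Rlt_le (Rpower_pos _ _) | lra].
  lra.
have [p [p2k pe pkey]] := nonSF_nat Hg Hnm Hns nsf mm exk.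
case: (ltnP p (maxn N 1)) => pN.
  have pN' : (p <= N)%N by move: pN; lia.
  have : (edges m <= N * k)%N by apply: leq_trans pe _; rewrite leq_mul2r pN' orbT.
  move/leP/le_INR; rewrite INR_muln => a.
  have : (INR N * INR k <= INR N * Rpower (INR k) (3 - beta))%R by apply: Rmult_le_compat_l.
  have : (INR N * Rpower (INR k) (3 - beta) <= C * Rpower (INR k) (3 - beta))%R.
    apply: Rmult_le_compat_r; [exact: Rlt_le (Rpower_pos _ _) | lra].
  lra.
have pN1 : (N <= p)%N by move: pN; lia.
have p1 : (1 <= p)%N by move: pN; lia.
have pR : (0 < INR p)%R by apply: lt_0_INR; apply/ltP.
have := Hc p pN1 => hcp.
have key : (2 * (c * Rpower (INR p) beta) * INR (edges m) <= INR p * INR p * INR k)%R.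
  have : (2 * ex (Kn p) H * edges m <= p * p * k)%N.
    apply: leq_trans pkey _; rewrite leq_mul2r leq_mul2l; apply/orP; right; apply/orP; right.
    exact: leq_subr.
  move/leP/le_INR; rewrite !INR_muln.
  have : (INR 2 = 2)%R by rewrite /=; ring.
  move=> -> a; apply: Rle_trans a.
  apply: Rmult_le_compat_r => //; apply: Rmult_le_compat_l => //; lra.
set e := INR (edges m) in key e0 *.
set Pb := Rpower (INR p) beta in key hcp.
set Q := Rpower (INR p) (2 - beta).
have Pb0 : (0 < Pb)%R := Rpower_pos _ _.
have pp : (INR p * INR p = Q * Pb)%R.
  by rewrite -Rpow2 // /Q /Pb -Rpower_plus; congr Rpower; ring.
have k1' : (0 < INR k)%R by lra.
have step1 : (2 * c * e <= Q * INR k)%R.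
  apply: (Rmult_le_reg_r Pb) => //.
  rewrite pp in key.
  have : (2 * (c * Pb) * e = 2 * c * e * Pb)%R by ring.
  have : (Q * Pb * INR k = Q * INR k * Pb)%R by ring.
  lra.
have step2 : (Q <= Rpower 2 (2 - beta) * Rpower (INR k) (2 - beta))%R.
  rewrite Rpower_mult_distr; [|lra|lra].
  apply: Rle_Rpower_l; first lra.
  split => //; have : (INR p < 2 * INR k)%R.
    have := lt_INR _ _ (elimT ltP p2k); rewrite INR_muln /=; lra.
  lra.
have step3 : (Rpower (INR k) (2 - beta) * INR k = Rpower (INR k) (3 - beta))%R.
  rewrite -{2}(Rpower_1 (INR k)) // -Rpower_plus; congr Rpower; ring.
have K0 := Rpower_pos (INR k) (3 - beta).
have : (e <= Rpower 2 (2 - beta) / (2 * c) * Rpower (INR k) (3 - beta))%R.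
  apply: (Rmult_le_reg_l (2 * c)); first lra.
  have -> : (2 * c * (Rpower 2 (2 - beta) / (2 * c) * Rpower (INR k) (3 - beta)) =
             Rpower 2 (2 - beta) * Rpower (INR k) (3 - beta))%R by field; lra.
  rewrite -step3.
  apply: Rle_trans step1 _.
  have := Rpower_pos 2 (2 - beta).
  move=> q0; rewrite -Rmult_assoc; apply: Rmult_le_compat_r; lra.
move=> a.
have : (Rpower 2 (2 - beta) / (2 * c) * Rpower (INR k) (3 - beta) <= C * Rpower (INR k) (3 - beta))%R.
  apply: Rmult_le_compat_r; first lra.
  rewrite /C; lra.
lra.
Qed.



Theorem theorem3p23 (h : nat) (H : rel 'I_h) (alpha beta : R) :
  is_graph H -> ~ is_matching H -> ~ is_star H ->
  (0 < alpha)%R -> (0 < beta)%R ->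
  (* (1) ex(K_n,H) = O(n^alpha)  ==>  E_H(k) = Omega(k^(2/alpha)) *)
  ((exists C : R, exists N : nat, forall n : nat, (N <= n)%N ->
       (INR (ex (Kn n) H) <= C * Rpower (INR n) alpha)%R) ->
   exists c : R, (0 < c)%R /\ exists K : nat, forall k : nat, (K <= k)%N ->
     exists (n : nat) (m : mgraph n),
       is_simple m /\ (ex m H < k)%N /\
       (c * Rpower (INR k) (2 / alpha) <= INR (edges m))%R)
  /\
  (* (2) ex(K_n,H) = Omega(n^beta)  ==>  E*_H(k) = O(k^(3-beta)) *)
  ((exists c : R, (0 < c)%R /\ exists N : nat, forall n : nat, (N <= n)%N ->
       (c * Rpower (INR n) beta <= INR (ex (Kn n) H))%R) ->
   exists C : R, exists K : nat, forall k : nat, (K <= k)%N ->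
     forall (n : nat) (m : mgraph n),
       is_multigraph m -> (ex m H < k)%N ->
       (INR (edges m) <= C * Rpower (INR k) (3 - beta))%R).
Proof.
move=> Hg Hnm Hns a0 b0; split.
- exact: part1.
- exact: part2.
Qed.
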